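(* Let $c\in\mathbb{N}$ and let $\beta$ be a parameter. Consider the recurrence $$x_{n+4}x_n=x_{n+3}x_{n+1}+\beta\,x_{n+2}^c,$$ corresponding to iteration of the rational map $\varphi:(x_0,x_1,x_2,x_3)\mapsto\big(x_1,x_2,x_3,(x_1x_3+\beta x_2^c)/x_0\big)$ (and its inverse for negative $n$). Then: (i) (Laurent property) $x_n\in\mathbb{Z}[x_0^{\pm1},x_1^{\pm1},x_2^{\pm1},x_3^{\pm1},\beta]$ for all $n\in\mathbb{Z}$; (ii) the recurrence satisfies the singularity confinement test: if for some $n$ one has $x_{n+4}=\epsilon\to 0$ (so that $x_{n+8}$ is potentially singular), then $x_{n+8}=O(1)$ as $\epsilon\to0$; (iii) $\varphi$ is a Poisson map with respect to the log-canonical Poisson bracket $\{\cdot,\cdot\}_c$ defined by $\{x_0,x_1\}_c=x_0x_1$, $\{x_0,x_2\}_c=c\,x_0x_2$, $\{x_0,x_3\}_c=(c+1)x_0x_3$, $\{x_1,x_2\}_c=x_1x_2$, $\{x_1,x_3\}_c=c\,x_1x_3$, $\{x_2,x_3\}_c=x_2x_3$, and this bracket is nondegenerate for $c\neq 2$.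
   Context: Here $\mathbb{N}$ includes $0$ (the paper treats the cases $c=0,1,2,\ldots$). The bracket is extended to rational functions of $x_0,x_1,x_2,x_3$ by bilinearity and the Leibniz rule. A map is Poisson if it preserves the bracket. *)

(* Defs.v *)
From HB Require Import structures.
From mathcomp Require Import all_boot all_order all_algebra.
From mathcomp Require Import generic_quotient.
From mathcomp.multinomials Require Import mpoly.

Set Implicit Arguments.
Unset Strict Implicit.
Unset Printing Implicit Defensive.

Import Order.TTheory GRing.Theory Num.Theory.
Local Open Scope ring_scope.

(* Polynomial ring Z[x0,x1,x2,x3,beta] : variables 0..3 are x0..x3, variable 4 is beta. *)
Definition Pol := {mpoly int[5]}.
Definition Fld := {fraction Pol}.
Definition toF (p : Pol) : Fld := @FracField.tofrac Pol p.
Local Notation "x %:F" := (toF x).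

Definition var (k : nat) : Fld := (('X_(inord k) : Pol))%:F.
Definition beta : Fld := var 4.

Definition state := (Fld * Fld * Fld * Fld)%type.

Definition phi (c : nat) (s : state) : state :=
  let: (a, b, d, e) := s in (b, d, e, (b * e + beta * d ^+ c) / a).

Definition phi_inv (c : nat) (s : state) : state :=
  let: (a, b, d, e) := s in ((a * d + beta * b ^+ c) / e, a, b, d).

Definition init : state := (var 0, var 1, var 2, var 3).

Definition fst4 (s : state) : Fld := s.1.1.1.

Definition xs (c : nat) (n : int) : Fld :=
  match n with
  | Posz k => fst4 (iter k (phi c) init)
  | Negz k => fst4 (iter k.+1 (phi_inv c) init)
  end.

(* Coefficients of the log-canonical bracket : {x_i, x_j}_c = omega c i j * x_i * x_j *)
Definition omega_up (c i j : nat) : int :=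
  match i, j with
  | 0, 1 => 1
  | 0, 2 => c%:Z
  | 0, 3 => (c + 1)%:Z
  | 1, 2 => 1
  | 1, 3 => c%:Z
  | 2, 3 => 1
  | _, _ => 0
  end.
Definition omega (c i j : nat) : int := omega_up c i j - omega_up c j i.

Definition dF (k : nat) (f : Fld) : Fld :=
  let r := repr f in
  let n := \n_r in let d := \d_r in
  ((mderiv (inord k) n) * d - n * (mderiv (inord k) d))%:F / (d ^+ 2)%:F.

(* the log-canonical bracket {.,.}_c extended to rational functions by bilinearity
   and the Leibniz rule:  {f,g} = sum_{i,j<4} df/dx_i dg/dx_j {x_i,x_j}_c
   (beta is a parameter, i.e. a Casimir) *)
Definition bracket (c : nat) (f g : Fld) : Fld :=
  \sum_(i < 4) \sum_(j < 4)
     (omega c i j)%:~R * var i * var j * dF i f * dF j g.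

Definition phiF (c : nat) (i : nat) : Fld :=
  match i with
  | 0 => var 1
  | 1 => var 2
  | 2 => var 3
  | _ => (var 1 * var 3 + beta * var 2 ^+ c) / var 0
  end.

(* phi is Poisson: phi^* {x_i,x_j}_c = {phi^* x_i, phi^* x_j}_c, i.e.
   {phi_i, phi_j}_c = omega_ij phi_i phi_j for all coordinate pairs
   (by the Leibniz rule this is equivalent to preserving the bracket). *)
Definition poisson_map (c : nat) : Prop :=
  forall i j : 'I_4,
    bracket c (phiF c i) (phiF c j) = (omega c i j)%:~R * phiF c i * phiF c j.

Definition nondegenerate_bracket (c : nat) : Prop :=
  \det (\matrix_(i < 4, j < 4) bracket c (var i) (var j)) != 0.

(* Main.v *)
Require Import Defs.
From HB Require Import structures.
From mathcomp Require Import all_boot all_order all_algebra.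
From mathcomp.multinomials Require Import mpoly.
From mathcomp Require Import ring zify.
From mathcomp Require Import generic_quotient.
Import Order.TTheory GRing.Theory Num.Theory.
Local Open Scope ring_scope.
Set Implicit Arguments.
Unset Strict Implicit.

Definition Xp (i : nat) : Pol := 'X_(inord i).
Definition MM : Pol := Xp 0 * Xp 1 * Xp 2 * Xp 3.
Definition mF : Fld := var 0 * var 1 * var 2 * var 3.

Lemma toF_rm : forall p q : Pol, toF (p * q) = toF p * toF q.
Proof. by move=> p q; rewrite /toF rmorphM. Qed.
Lemma toF_ra : forall p q : Pol, toF (p + q) = toF p + toF q.
Proof. by move=> p q; rewrite /toF rmorphD. Qed.
Lemma toF_rn : forall p : Pol, toF (- p) = - toF p.
Proof. by move=> p; rewrite /toF rmorphN. Qed.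
Lemma toF_rX : forall (p : Pol) k, toF (p ^+ k) = toF p ^+ k.
Proof. by move=> p k; rewrite /toF rmorphXn. Qed.
Lemma toF_r1 : toF 1 = 1.
Proof. by rewrite /toF rmorph1. Qed.
Lemma toF_r0 : toF 0 = 0.
Proof. by rewrite /toF rmorph0. Qed.
Lemma toF_inj (p q : Pol) : toF p = toF q -> p = q.
Proof. by move=> /eqP; rewrite /toF tofrac_eq => /eqP. Qed.

Lemma mF_toF : mF = toF MM.
Proof. by rewrite /mF /MM !toF_rm. Qed.

Lemma Xp_neq0 i : Xp i != 0.
Proof.
apply/eqP => H; have := @mcoeffXU 5 int (inord i) (inord i).
by rewrite -/(Xp i) H mcoeff0 eqxx.
Qed.

Lemma var_neq0 i : var i != 0.
Proof.
apply/negP => /eqP H. have : toF (Xp i) = toF 0 by rewrite toF_r0.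
by move/toF_inj/eqP; rewrite (negbTE (Xp_neq0 i)).
Qed.

Definition isL (f : Fld) : Prop := exists (p : Pol) (k : nat), f * mF ^+ k = toF p.

Lemma isL_toF p : isL (toF p).
Proof. by exists p, 0%N; rewrite expr0 mulr1. Qed.

Lemma isL0 : isL 0. Proof. by rewrite -toF_r0; apply: isL_toF. Qed.
Lemma isL1 : isL 1. Proof. by rewrite -toF_r1; apply: isL_toF. Qed.

Lemma isLD f g : isL f -> isL g -> isL (f + g).
Proof.
move=> [p [k Hp]] [q [l Hq]]; exists (p * MM ^+ l + q * MM ^+ k), (k + l)%N.
rewrite toF_ra !toF_rm !toF_rX -mF_toF -Hp -Hq exprD; ring.
Qed.

Lemma isLM f g : isL f -> isL g -> isL (f * g).
Proof.
move=> [p [k Hp]] [q [l Hq]]; exists (p * q), (k + l)%N.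
rewrite toF_rm -Hp -Hq exprD; ring.
Qed.

Lemma isLN f : isL f -> isL (- f).
Proof.
move=> [p [k Hp]]; exists (- p), k. rewrite toF_rn -Hp; ring.
Qed.

Lemma isLB f g : isL f -> isL g -> isL (f - g).
Proof. by move=> Hf Hg; apply: isLD => //; apply: isLN. Qed.

Lemma isLX f k : isL f -> isL (f ^+ k).
Proof.
move=> Hf; elim: k => [|k IH]; first by rewrite expr0; exact: isL1.
by rewrite exprS; apply: isLM.
Qed.

Lemma isL_var i : isL (var i).
Proof. exact: isL_toF. Qed.

Lemma isL_beta : isL beta.
Proof. exact: isL_var. Qed.

Lemma inv4 (F : fieldType) (a b c d : F) : a != 0 -> b != 0 -> c != 0 -> d != 0 ->
  [/\ a^-1 * (a*b*c*d) = b*c*d, b^-1 * (a*b*c*d) = a*c*d,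
      c^-1 * (a*b*c*d) = a*b*d & d^-1 * (a*b*c*d) = a*b*c].
Proof. by move=> Ha Hb Hc Hd; split; field. Qed.

Lemma isL_varV i : (i < 4)%N -> isL (var i)^-1.
Proof.
move=> Hi.
have [E0 E1 E2 E3] := inv4 (var_neq0 0) (var_neq0 1) (var_neq0 2) (var_neq0 3).
case: i Hi => [|[|[|[|i]]]] // _.
- by exists (Xp 1 * Xp 2 * Xp 3), 1%N; rewrite expr1 /mF E0 !toF_rm.
- by exists (Xp 0 * Xp 2 * Xp 3), 1%N; rewrite expr1 /mF E1 !toF_rm.
- by exists (Xp 0 * Xp 1 * Xp 3), 1%N; rewrite expr1 /mF E2 !toF_rm.
- by exists (Xp 0 * Xp 1 * Xp 2), 1%N; rewrite expr1 /mF E3 !toF_rm.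
Qed.

Definition cm (a b : Fld) : Prop :=
  exists u v, [/\ isL u, isL v & u * a + v * b = 1].

Lemma cm_sym a b : cm a b -> cm b a.
Proof. by move=> [u [v [Hu Hv E]]]; exists v, u; split => //; rewrite addrC. Qed.

Lemma cm_1 a : cm a 1.
Proof. by exists 0, 1; split; [exact: isL0|exact: isL1|rewrite mul0r add0r mulr1]. Qed.

Lemma cm_unit a w b : isL w -> w * a = 1 -> cm a b.
Proof. by move=> Hw E; exists w, 0; split; [done|exact: isL0|rewrite mul0r addr0]. Qed.

Lemma cm_mul a b c : isL b -> cm a b -> cm a c -> cm a (b * c).
Proof.
move=> Hb [u1 [v1 [Hu1 Hv1 E1]]] [u2 [v2 [Hu2 Hv2 E2]]].
exists (u1 + v1 * b * u2), (v1 * v2); split.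
- by apply: isLD => //; apply: isLM => //; apply: isLM.
- by apply: isLM.
- have -> : (u1 + v1 * b * u2) * a + v1 * v2 * (b * c) = u1 * a + v1 * b * (u2 * a + v2 * c) by ring.
  by rewrite E2 mulr1.
Qed.

Lemma cm_exp a b k : isL b -> cm a b -> cm a (b ^+ k).
Proof.
move=> Hb H; elim: k => [|k IH]; first by rewrite expr0; apply: cm_1.
by rewrite exprS; apply: cm_mul.
Qed.

Lemma cm_mulr a x b : isL x -> cm (x * a) b -> cm a b.
Proof.
move=> Hx [u [v [Hu Hv E]]]; exists (u * x), v; split => //; first by apply: isLM.
by rewrite -E mulrA.
Qed.

Lemma cm_addmul a b t : isL t -> cm a b -> cm (a + b * t) b.
Proof.
move=> Ht [u [v [Hu Hv E]]]; exists u, (v - u * t); split => //.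
  by apply: isLB => //; apply: isLM.
have -> : u * (a + b * t) + (v - u * t) * b = u * a + v * b by ring.
done.
Qed.

Lemma cm_comb a b A B P : isL A -> isL B -> a * A + b * B = P -> cm b P -> cm a b.
Proof.
move=> HA HB E [s [t [Hs Ht E2]]]; exists (t * A), (s + t * B); split.
- by apply: isLM.
- by apply: isLD => //; apply: isLM.
- have -> : t * A * a + (s + t * B) * b = s * b + t * (a * A + b * B) by ring.
  by rewrite E.
Qed.

Lemma cm_comb2 a b s A B Y : isL A -> isL B -> isL Y ->
  a * A + b * B = s * Y -> cm a s -> cm b Y -> cm a b.
Proof.
move=> HA HB HY E [u [v [Hu Hv E1]]] HbY.
apply: (@cm_comb a b (u * Y + v * A) (v * B) Y).
- by apply: isLD; apply: isLM.
- by apply: isLM.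
- have -> : a * (u * Y + v * A) + b * (v * B) = u * a * Y + v * (a * A + b * B) by ring.
  rewrite E.
  have -> : u * a * Y + v * (s * Y) = (u * a + v * s) * Y by ring.
  by rewrite E1 mul1r.
- done.
Qed.

Lemma cm_dvd e m N W : isL N -> isL W -> cm e m -> m * N = e * W ->
  exists w, isL w /\ N = e * w.
Proof.
move=> HN HW [u [v [Hu Hv E1]]] E; exists (u * N + v * W); split.
  by apply: isLD; apply: isLM.
have -> : e * (u * N + v * W) = u * e * N + v * (e * W) by ring.
rewrite -E.
have -> : u * e * N + v * (m * N) = (u * e + v * m) * N by ring.
by rewrite E1 mul1r.
Qed.

Lemma Zlem k X e T : isL X -> isL e -> isL T ->
  exists Z, isL Z /\ (X + e * T) ^+ k = X ^+ k + e * Z.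
Proof.
move=> HX He HT; elim: k => [|k [Z [HZ E]]].
  by exists 0; split; [exact: isL0|rewrite !expr0 mulr0 addr0].
exists (Z * X + X ^+ k * T + e * Z * T); split.
  by apply: isLD; [apply: isLD|]; apply: isLM => //; try apply: isLM => //; apply: isLX.
by rewrite !exprS E; ring.
Qed.

Lemma divlem N e w : isL w -> N = e * w -> isL (N / e) /\ e * (N / e) = N.
Proof.
move=> Hw ->; have [->|He] := eqVneq e 0.
  rewrite !mul0r; split => //; exact: isL0.
by rewrite mulrC mulKf //; split => //; rewrite mulrC.
Qed.

Lemma keyid (R : comRingType) (a b d f e g h k bt dc fc gc hc Z : R) :
  e * a = f * b + bt * dc -> g * b = e * d + bt * fc -> k * f = h * e + bt * gc ->
  hc * dc = gc * fc + e * Z ->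
  b * dc * f * (k * g + bt * hc) =
  e * (b * h * g * dc + bt * b * f * Z + bt * gc * d * dc + bt * gc * fc * a).
Proof.
move=> R0 R1 R3 R2; apply/eqP; rewrite -subr_eq0.
have -> : b * dc * f * (k * g + bt * hc) -
  e * (b * h * g * dc + bt * b * f * Z + bt * gc * d * dc + bt * gc * fc * a) =
  b * dc * g * (k * f - (h * e + bt * gc)) + bt * b * f * (hc * dc - (gc * fc + e * Z))
  + bt * gc * dc * (g * b - (e * d + bt * fc)) + bt * gc * fc * (f * b + bt * dc - e * a)
  by ring.
by rewrite R0 R1 R3 R2 !subrr !mulr0 !addr0.
Qed.

Ltac solveL := repeat first [ assumption | exact: isL_beta | exact: isL1 | exact: isL0 | apply: isLD | apply: isLM | apply: isLN | apply: isLB | apply: isLX ].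

Definition NumS c (z : nat -> Fld) m := z m.+3 * z m.+1 + beta * z m.+2 ^+ c.

Definition Ginv c (z : nat -> Fld) N :=
  [/\ forall m, (m < N)%N -> isL (z m) /\ cm (z m) beta,
      forall m, (m.+1 < N)%N -> cm (z m.+1) (z m),
      forall m, (m.+2 < N)%N -> cm (z m.+2) (z m ^+ c),
      forall m, (m.+3 < N)%N -> cm (z m.+3) (z m) &
      forall m, (m.+4 < N)%N -> z m * z m.+4 = NumS c z m].

Lemma ltS_case m N : (m < N.+1)%N -> (m < N)%N \/ m = N.
Proof. by rewrite ltnS leq_eqVlt => /orP [/eqP ->|H]; [right|left]. Qed.

Lemma laurent_seq c (z : nat -> Fld) :
  (forall i, (i < 4)%N -> isL (z i) /\ exists w, isL w /\ w * z i = 1) ->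
  (forall m, z m.+4 = NumS c z m / z m) ->
  forall m, isL (z m).
Proof.
move=> Hseed Hrec.
have unitcm : forall i y, (i < 4)%N -> cm (z i) y.
  by move=> i y /Hseed [_ [w [Hw E]]]; exact: (cm_unit y Hw E).
suff HG : forall N, Ginv c z N.
  by move=> m; have [H _ _ _ _] := HG m.+1; have [] := H m (ltnSn m).
elim=> [|N [G0 G1 G2 G3 G4]].
  by split => m.
have isLold : forall m, (m < N)%N -> isL (z m) by move=> m /G0 [].
case: (ltnP N 4) => HN.
  have [HzN [w [Hw Ew]]] := Hseed N HN.
  split.
  - move=> m /ltS_case [/G0 //|->]; split => //; exact: unitcm.
  - move=> m /ltS_case [/G1 //|E]; rewrite E; exact: unitcm.
  - move=> m /ltS_case [/G2 //|E]; rewrite E; exact: unitcm.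
  - move=> m /ltS_case [/G3 //|E]; rewrite E; exact: unitcm.
  - move=> m /ltS_case [/G4 //|E]; by move: HN; rewrite -E.
case: N G0 G1 G2 G3 G4 isLold HN => [|[|[|[|n]]]] // G0 G1 G2 G3 G4 isLold _.
have Lz : forall j, (j < 4)%N -> isL (z (n + j)%N).
  by move=> j Hj; apply: isLold; rewrite -addn4 ltn_add2l.
have L0 : isL (z n) by have := Lz 0%N ltac:(lia); rewrite addn0.
have L1 : isL (z n.+1) by have := Lz 1%N ltac:(lia); rewrite addn1.
have L2 : isL (z n.+2) by have := Lz 2%N ltac:(lia); rewrite addn2.
have L3 : isL (z n.+3) by have := Lz 3%N ltac:(lia); rewrite addn3.
have LNum : isL (NumS c z n).
  by apply: isLD; [apply: isLM|apply: isLM; [exact: isL_beta|apply: isLX]].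
have [w [Hw Ew]] : exists w, isL w /\ NumS c z n = z n * w.
  case: (ltnP n 4) => Hn.
    have [_ [w' [Hw' Ew']]] := Hseed n Hn.
    exists (w' * NumS c z n); split; first by apply: isLM.
    by rewrite mulrA [z n * w']mulrC Ew' mul1r.
  move: Hn G0 G1 G2 G3 G4 isLold Lz L0 L1 L2 L3 LNum.
  case: n => [|[|[|[|n]]]] // _ G0 G1 G2 G3 G4 isLold Lz L0 L1 L2 L3 LNum.
  have La : isL (z n) by apply: isLold; lia.
  have Lb : isL (z n.+1) by apply: isLold; lia.
  have Ld : isL (z n.+2) by apply: isLold; lia.
  have Lf : isL (z n.+3) by apply: isLold; lia.
  have [Z [LZ EZ]] : exists Z, isL Z /\
      (z n.+4.+2 ^+ c) * (z n.+2 ^+ c) = (z n.+4.+1 ^+ c) * (z n.+3 ^+ c) + z n.+4 * Z.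
    destruct c as [|c'].
      by exists 0; split; [exact: isL0|rewrite !expr0 mulr0 addr0 mulr1].
    have [Z [LZ EZ]] := Zlem c'.+1 (X := z n.+4.+1 * z n.+3) (e := z n.+4)
         (T := beta * z n.+4 ^+ c') (isLM L1 Lf) L0 (isLM isL_beta (isLX c' L0)).
    exists Z; split => //; rewrite -!exprMn -EZ; congr (_ ^+ _).
    have := G4 n.+2 ltac:(lia); rewrite /NumS => E.
    by rewrite mulrC E exprS; ring.
  have R0 : z n.+4 * z n = z n.+3 * z n.+1 + beta * z n.+2 ^+ c.
    by rewrite mulrC (G4 n ltac:(lia)).
  have R1 : z n.+4.+1 * z n.+1 = z n.+4 * z n.+2 + beta * z n.+3 ^+ c.
    by rewrite mulrC (G4 n.+1 ltac:(lia)).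
  have R3 : z n.+4.+3 * z n.+3 = z n.+4.+2 * z n.+4 + beta * z n.+4.+1 ^+ c.
    by rewrite mulrC (G4 n.+3 ltac:(lia)).
  have K := keyid R0 R1 R3 EZ.
  have Hcm : cm (z n.+4) (z n.+1 * z n.+2 ^+ c * z n.+3).
    apply: cm_mul; first by apply: isLM => //; apply: isLX.
      apply: cm_mul => //; [exact: (G3 n.+1 ltac:(lia))|exact: (G2 n.+2 ltac:(lia))].
    exact: (G1 n.+3 ltac:(lia)).
  apply: (cm_dvd LNum _ Hcm); last by rewrite /NumS; exact: K.
  repeat (apply: isLD || apply: isLM || apply: isLX || exact: isL_beta || done).
have [LzN EzN] : isL (z n.+4) /\ z n * z n.+4 = NumS c z n.
  by rewrite Hrec; apply: (divlem Hw Ew).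
have cmNb : cm (z n.+4) beta.
  have H1 : cm beta (z n.+3 * z n.+1).
    apply: (cm_mul L3); apply: cm_sym; [exact: (G0 n.+3 ltac:(lia)).2|exact: (G0 n.+1 ltac:(lia)).2].
  have H2 := cm_addmul (isLX c L2) (cm_sym H1).
  rewrite -/(NumS c z n) -EzN in H2; exact: cm_mulr L0 H2.
have D1 : cm (z n.+4) (z n.+3).
  apply: (@cm_comb2 _ _ beta (z n) (- z n.+1) (z n.+2 ^+ c)) => //.
  - exact: isLN.
  - exact: isLX.
  - by rewrite [z n.+4 * z n]mulrC EzN /NumS; ring.
  - exact: cm_exp _ L2 (G1 n.+2 ltac:(lia)).
have D3 : cm (z n.+4) (z n.+1).
  apply: (@cm_comb2 _ _ beta (z n) (- z n.+3) (z n.+2 ^+ c)) => //.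
  - exact: isLN.
  - exact: isLX.
  - by rewrite [z n.+4 * z n]mulrC EzN /NumS; ring.
  - exact: cm_exp _ L2 (cm_sym (G1 n.+1 ltac:(lia))).
have D2 : cm (z n.+4) (z n.+2 ^+ c).
  destruct c as [|c']; first by rewrite expr0; exact: cm_1.
  apply: (cm_exp _ L2).
  apply: (@cm_comb _ _ (z n) (- (beta * z n.+2 ^+ c')) (z n.+3 * z n.+1)) => //.
  - solveL.
  - by rewrite [z n.+4 * z n]mulrC EzN /NumS exprS; ring.
  - apply: (cm_mul L3); [exact: cm_sym (G1 n.+2 ltac:(lia))|exact: (G1 n.+1 ltac:(lia))].
split.
- by move=> m /ltS_case [/G0 //|->]; split.
- by move=> m /ltS_case [/G1 //|[->]].
- by move=> m /ltS_case [/G2 //|[->]].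
- by move=> m /ltS_case [/G3 //|[->]].
- by move=> m /ltS_case [/G4 //|[->]].
Qed.

Definition zP c k := fst4 (iter k (phi c) init).
Definition zN c k := (iter k (phi_inv c) init).2.

Lemma zP_rec c m : zP c m.+4 = NumS c (zP c) m / zP c m.
Proof.
have E j : zP c (m + j) = fst4 (iter j (phi c) (iter m (phi c) init)).
  by rewrite /zP addnC iterD.
rewrite /NumS; move: (E 0%N) (E 1%N) (E 2%N) (E 3%N) (E 4%N); rewrite !addnS addn0.
case: (iter m (phi c) init) => [[[a b] d] e] /= -> -> -> -> ->.
by rewrite [e * b]mulrC.
Qed.

Lemma zN_rec c m : zN c m.+4 = NumS c (zN c) m / zN c m.
Proof.
have E j : zN c (m + j) = (iter j (phi_inv c) (iter m (phi_inv c) init)).2.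
  by rewrite /zN addnC iterD.
rewrite /NumS; move: (E 0%N) (E 1%N) (E 2%N) (E 3%N) (E 4%N); rewrite !addnS addn0.
by case: (iter m (phi_inv c) init) => [[[a b] d] e] /= -> -> -> -> ->.
Qed.

Lemma xs_neg c k : xs c (Negz k) = zN c k.+4.
Proof.
rewrite /xs /zN -[k.+4]/(3 + k.+1)%N iterD.
by case: (iter k.+1 (phi_inv c) init) => [[[a b] d] e].
Qed.

Lemma var_unit i : (i < 4)%N -> isL (var i) /\ exists w, isL w /\ w * var i = 1.
Proof.
move=> Hi; split; first exact: isL_var.
by exists (var i)^-1; split; [exact: isL_varV|rewrite mulVf // var_neq0].
Qed.

Lemma xs_isL c n : isL (xs c n).
Proof.
case: n => k.
  apply: (laurent_seq (z := zP c)); last exact: zP_rec.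
  by case=> [|[|[|[|i]]]] // _; apply: var_unit.
rewrite xs_neg; apply: (laurent_seq (z := zN c)); last exact: zN_rec.
by case=> [|[|[|[|i]]]] // _; apply: var_unit.
Qed.

Theorem part1 c : forall n : int, exists (p : Pol) (a0 a1 a2 a3 : nat),
      xs c n * (var 0 ^+ a0 * var 1 ^+ a1 * var 2 ^+ a2 * var 3 ^+ a3)
      = toF p.
Proof.
move=> n; have [p [k E]] := xs_isL c n.
by exists p, k, k, k, k; rewrite -E /mF !exprMn.
Qed.

Section ReprEq.
Local Open Scope quotient_scope.

Lemma repr_eq (f : Fld) :
  f = toF (\n_(repr f)) / toF (\d_(repr f)).
Proof.
rewrite -[f in LHS]reprK. set r := repr f.
rewrite /toF; unlock FracField.tofrac.
change (\pi_(FracField.type Pol) r = FracField.mul (\pi_(FracField.type Pol) (Ratio \n_r 1)) (FracField.inv (\pi_(FracField.type Pol) (Ratio \d_r 1)))).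
rewrite -FracField.pi_inv -FracField.pi_mul /FracField.mulf /FracField.invf.
rewrite !numden_Ratio ?oner_neq0 ?denom_ratioP // mul1r mulr1.
by rewrite FracField.Ratio_numden.
Qed.

End ReprEq.

Lemma toF_neq0 (p : Pol) : p != 0 -> toF p != 0.
Proof. by move=> H; rewrite /toF tofrac_eq0. Qed.

Lemma cross (F : fieldType) (a b c e : F) : b != 0 -> e != 0 -> a / b = c / e -> a * e = c * b.
Proof. by move=> Hb He /eqP; rewrite eqr_div // => /eqP. Qed.

Lemma dF_frac k (p q : Pol) : q != 0 ->
  dF k (toF p / toF q) =
  toF (mderiv (inord k) p * q - p * mderiv (inord k) q) / toF (q ^+ 2).
Proof.
move=> Hq; rewrite /dF.
set f := toF p / toF q.
have Ef := repr_eq f.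
set r := repr f in Ef *.
set n := \n_r in Ef *; set d := \d_r in Ef *.
have Hd : d != 0 by exact: denom_ratioP.


have E : n * q = p * d.
  apply: toF_inj. rewrite !toF_rm.
  have Hq' := toF_neq0 Hq; have Hd' := toF_neq0 Hd.
  have := cross Hq' Hd' Ef.
  by rewrite [toF p * _]mulrC => ->; rewrite mulrC.
have E' : mderiv (inord k) n * q + n * mderiv (inord k) q =
          mderiv (inord k) p * d + p * mderiv (inord k) d.
  by rewrite -!mderivM E.
set n' := mderiv (inord k) n in E' *; set d' := mderiv (inord k) d in E' *.
set p' := mderiv (inord k) p in E' *; set q' := mderiv (inord k) q in E' *.
have E2 : (n' * d - n * d') * q ^+ 2 = (p' * q - p * q') * d ^+ 2.
  apply/eqP; rewrite -subr_eq0.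
  have -> : (n' * d - n * d') * q ^+ 2 - (p' * q - p * q') * d ^+ 2 =
    d * q * ((n' * q + n * q') - (p' * d + p * d')) - (d' * q + q' * d) * (n * q - p * d)
    by ring.
  by rewrite E E' !subrr !mulr0 subrr.
apply/eqP; rewrite eqr_div ?toF_neq0 ?expf_neq0 //.
by rewrite -!toF_rm E2.
Qed.

Lemma sum4 (R : nmodType) (G : nat -> R) :
  \sum_(i < 4) G (nat_of_ord i) = G 0%N + G 1%N + G 2%N + G 3%N.
Proof. by rewrite !big_ord_recr big_ord0 /= add0r. Qed.

Definition brE (c : nat) (f g : Fld) : Fld :=
  var 0 * var 1 * (dF 0 f * dF 1 g - dF 1 f * dF 0 g)
  + c%:R * var 0 * var 2 * (dF 0 f * dF 2 g - dF 2 f * dF 0 g)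
  + (c%:R + 1) * var 0 * var 3 * (dF 0 f * dF 3 g - dF 3 f * dF 0 g)
  + var 1 * var 2 * (dF 1 f * dF 2 g - dF 2 f * dF 1 g)
  + c%:R * var 1 * var 3 * (dF 1 f * dF 3 g - dF 3 f * dF 1 g)
  + var 2 * var 3 * (dF 2 f * dF 3 g - dF 3 f * dF 2 g).

Lemma bracketE c f g : bracket c f g = brE c f g.
Proof.
rewrite /bracket.
rewrite (sum4 (fun i => \sum_(j < 4) (omega c i j)%:~R * var i * var j * dF i f * dF j g)).
rewrite (sum4 (fun j => (omega c 0 j)%:~R * var 0 * var j * dF 0 f * dF j g)).
rewrite (sum4 (fun j => (omega c 1 j)%:~R * var 1 * var j * dF 1 f * dF j g)).
rewrite (sum4 (fun j => (omega c 2 j)%:~R * var 2 * var j * dF 2 f * dF j g)).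
rewrite (sum4 (fun j => (omega c 3 j)%:~R * var 3 * var j * dF 3 f * dF j g)).
rewrite /omega /omega_up /brE /= !intrB.
rewrite -[(Posz c)%:~R]/(c%:R : Fld) -[(Posz 1)%:~R]/(1 : Fld) -[(Posz 0)%:~R]/(0 : Fld) -[(Posz (c + 1))%:~R]/((c + 1)%:R : Fld) natrD.
move: (var 0) (var 1) (var 2) (var 3) (dF 0 f) (dF 1 f) (dF 2 f) (dF 3 f) (dF 0 g) (dF 1 g) (dF 2 g) (dF 3 g) (c%:R : Fld) => v0 v1 v2 v3 f0 f1 f2 f3 g0 g1 g2 g3 C.
ring.
Qed.

Lemma mderivXU (i j : 'I_5) : mderiv i ('X_j : Pol) = (j == i)%:R.
Proof.
rewrite mderivX mnm1E; case: eqP => [->|_].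
  have -> : (U_(i) - U_(i) = 0)%MM by apply/mnmP => l; rewrite mnmBE subnn mnm0E.
  by rewrite mpolyX0 scale1r.
by rewrite scale0r.
Qed.

Lemma mderiv1 (i : 'I_5) : mderiv i (1 : Pol) = 0.
Proof. by rewrite -mpolyC1 mderivC. Qed.

Lemma mderivXn (i : 'I_5) (q : Pol) m :
  mderiv i (q ^+ m) = m%:R * q ^+ m.-1 * mderiv i q.
Proof.
elim: m => [|m IH]; first by rewrite expr0 mderiv1 !mul0r.
rewrite exprS mderivM IH; case: m IH => [|m] _ /=.
  rewrite !expr0; ring.
rewrite exprS; ring.
Qed.

Lemma inord_eq (i k : nat) : (i < 5)%N -> (k < 5)%N ->
  ((inord i : 'I_5) == inord k) = (i == k).
Proof. by move=> Hi Hk; rewrite -val_eqE /= !inordK. Qed.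

Lemma toF_nat n : toF (n%:R) = n%:R.
Proof. by rewrite /toF rmorph_nat. Qed.

Lemma dF_var (k i : nat) : (k < 5)%N -> (i < 5)%N -> dF k (var i) = (i == k)%:R.
Proof.
move=> Hk Hi.
have -> : var i = toF (Xp i) / toF 1 by rewrite toF_r1 divr1.
rewrite dF_frac ?oner_neq0 // mderiv1 mulr0 subr0 mulr1 expr1n toF_r1 divr1.
by rewrite /Xp mderivXU inord_eq // toF_nat.
Qed.

Lemma bracket_var c (i j : 'I_4) :
  bracket c (var i) (var j) = (omega c i j)%:~R * var i * var j.
Proof.
rewrite bracketE /brE.
case: i j => [[|[|[|[|i]]]] Hi] [[|[|[|[|j]]]] Hj] //;
  rewrite !dF_var // /omega /omega_up /= ?intrB;
  rewrite -?[(Posz c)%:~R]/(c%:R : Fld) -?[(Posz 1)%:~R]/(1 : Fld) -?[(Posz 0)%:~R]/(0 : Fld)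
     -?[(Posz (c + 1))%:~R]/((c + 1)%:R : Fld) ?natrD;
  move: (var 0) (var 1) (var 2) (var 3) (c%:R : Fld) => v0 v1 v2 v3 C; ring.
Qed.

Definition PF c : Pol := Xp 1 * Xp 3 + Xp 4 * Xp 2 ^+ c.

Lemma toF_rB (p q : Pol) : toF (p - q) = toF p - toF q.
Proof. by rewrite /toF rmorphB. Qed.

Lemma phiF3 c : phiF c 3 = toF (PF c) / toF (Xp 0).
Proof. by rewrite /phiF /PF toF_ra !toF_rm toF_rX. Qed.

Lemma fl1 (F : fieldType) (A B v : F) : v != 0 -> (A * v - B) / v ^+ 2 = A / v - B / v ^+ 2.
Proof. by move=> H; field. Qed.

Lemma dF_F c (k : nat) : (k < 4)%N ->
  dF k (phiF c 3) =
  ((1 == k)%:R * var 3 + var 1 * (3 == k)%:R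
   + ((4 == k)%:R * var 2 ^+ c + beta * (c%:R * var 2 ^+ c.-1 * (2 == k)%:R))) / var 0
  - (var 1 * var 3 + beta * var 2 ^+ c) * (0 == k)%:R / var 0 ^+ 2.
Proof.
move=> Hk; rewrite phiF3 dF_frac ?Xp_neq0 //.
rewrite /PF !mderivD !mderivM !mderivXn /Xp !mderivXU !inord_eq //; try lia.
rewrite !(toF_rB, toF_ra, toF_rm, toF_rX, toF_nat).
have H0 := var_neq0 0.
rewrite /beta /var in H0 *.
move: (toF 'X_(inord 0)) (toF 'X_(inord 1)) (toF 'X_(inord 2)) (toF 'X_(inord 3)) (toF 'X_(inord 4)) H0 => v0 v1 v2 v3 b H0.
move: ((1 == k)%:R : Fld) ((2 == k)%:R : Fld) ((3 == k)%:R : Fld) ((4 == k)%:R : Fld) ((0 == k)%:R : Fld) => e1 e2 e3 e4 e0.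
move: (c%:R : Fld) (v2 ^+ c) (v2 ^+ c.-1) => C V W.
exact: fl1.
Qed.

Lemma gF2 (F : fieldType) (v0 v2 b C W : F) : v0 != 0 -> v2 != 0 ->
  C * b * (v2 * W) / (v0 * v2) = C * b * W / v0.
Proof. by move=> H0 H2; field; rewrite ?H0 ?H2. Qed.

Lemma dF_Fc c :
  [/\ dF 0 (phiF c 3) = - (var 1 * var 3 + beta * var 2 ^+ c) / var 0 ^+ 2,
      dF 1 (phiF c 3) = var 3 / var 0,
      dF 2 (phiF c 3) = c%:R * beta * var 2 ^+ c / (var 0 * var 2) &
      dF 3 (phiF c 3) = var 1 / var 0].
Proof.
rewrite !dF_F //=.
have H0 := var_neq0 0; have H2 := var_neq0 2.
move: (var 0) (var 1) (var 2) (var 3) beta H0 H2 => v0 v1 v2 v3 b H0 H2.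
split; try by ring.
case: c => [|c]; first by rewrite /=; ring.
rewrite /= exprS; move: (v2 ^+ c) => W.
rewrite gF2 //; ring.
Qed.

Section Gen.
Variables (F : fieldType) (v0 v1 v2 v3 b C V : F).
Hypotheses (H0 : v0 != 0) (H2 : v2 != 0).
Lemma gen1 : - v0 * v1 * (- (v1 * v3 + b * V) / v0 ^+ 2) + v1 * v2 * (C * b * V / (v0 * v2))
  + C * v1 * v3 * (v1 / v0) = (C + 1) * v1 * ((v1 * v3 + b * V) / v0).
Proof. by field; rewrite ?H0 ?H2. Qed.
Lemma gen2 : - C * v0 * v2 * (- (v1 * v3 + b * V) / v0 ^+ 2) - v1 * v2 * (v3 / v0)
  + v2 * v3 * (v1 / v0) = C * v2 * ((v1 * v3 + b * V) / v0).
Proof. by field; rewrite ?H0 ?H2. Qed.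
Lemma gen3 : - (C + 1) * v0 * v3 * (- (v1 * v3 + b * V) / v0 ^+ 2) - C * v1 * v3 * (v3 / v0)
  - v2 * v3 * (C * b * V / (v0 * v2)) = v3 * ((v1 * v3 + b * V) / v0).
Proof. by field; rewrite ?H0 ?H2. Qed.
End Gen.

Lemma brF c (a : nat) : (a < 3)%N ->
  bracket c (var a.+1) (phiF c 3) = (omega c a 3)%:~R * var a.+1 * phiF c 3.
Proof.
move=> Ha.
have [g0 g1 g2 g3] := dF_Fc c.
have H0 := var_neq0 0; have H2 := var_neq0 2.
rewrite bracketE /brE g0 g1 g2 g3 /omega /omega_up.
case: a Ha => [|[|[|a]]] // _; rewrite !dF_var //= ?intrB;
  rewrite -?[(Posz c)%:~R]/(c%:R : Fld) -?[(Posz 1)%:~R]/(1 : Fld) -?[(Posz 0)%:~R]/(0 : Fld)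
     -?[(Posz (c + 1))%:~R]/((c + 1)%:R : Fld) ?natrD /phiF;
  move: (var 0) (var 1) (var 2) (var 3) beta (c%:R : Fld) (var 2 ^+ c) H0 H2
    => v0 v1 v2 v3 b C V H0 H2.
- by apply: (etrans _ (etrans (gen1 v1 v3 b C V H0 H2) _)); ring.
- by apply: (etrans _ (etrans (gen2 v1 v2 v3 b C V H0) _)); ring.
- by apply: (etrans _ (etrans (gen3 v1 v3 b C V H0 H2) _)); ring.
Qed.

Lemma br_anti c f g : bracket c f g = - bracket c g f.
Proof.
rewrite !bracketE /brE.
move: (var 0) (var 1) (var 2) (var 3) (dF 0 f) (dF 1 f) (dF 2 f) (dF 3 f) (dF 0 g) (dF 1 g) (dF 2 g) (dF 3 g) (c%:R : Fld) => v0 v1 v2 v3 f0 f1 f2 f3 g0 g1 g2 g3 C.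
ring.
Qed.

Lemma br_self c f : bracket c f f = 0.
Proof.
rewrite !bracketE /brE.
move: (var 0) (var 1) (var 2) (var 3) (dF 0 f) (dF 1 f) (dF 2 f) (dF 3 f) (c%:R : Fld) => v0 v1 v2 v3 f0 f1 f2 f3 C.
ring.
Qed.

Lemma bracket_var_nat c (i j : nat) (Hi : (i < 4)%N) (Hj : (j < 4)%N) :
  bracket c (var i) (var j) = (omega c i j)%:~R * var i * var j.
Proof. exact: (bracket_var c (Ordinal Hi) (Ordinal Hj)). Qed.

Lemma poisson c : poisson_map c.
Proof.
move=> [[|[|[|[|i]]]] Hi] [[|[|[|[|j]]]] Hj] //=;
  rewrite ?bracket_var_nat ?brF //;
  try (rewrite br_anti brF //=);
  try (rewrite br_self);
  rewrite /omega /omega_up /= ?intrB;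
  rewrite -?[(Posz c)%:~R]/(c%:R : Fld) -?[(Posz 1)%:~R]/(1 : Fld) -?[(Posz 0)%:~R]/(0 : Fld)
     -?[(Posz (c + 1))%:~R]/((c + 1)%:R : Fld);
  move: (var 1) (var 2) (var 3) (phiF c 3) (c%:R : Fld) ((c+1)%:R : Fld) => v1 v2 v3 F C C1;
  ring.
Qed.

Definition Iv (C : Fld) (i j : nat) : Fld :=
  match i, j with
  | 0, 1 => -1 | 0, 2 => C | 0, 3 => -1
  | 1, 0 => 1 | 1, 2 => - (C + 1) | 1, 3 => C
  | 2, 0 => - C | 2, 1 => C + 1 | 2, 3 => -1
  | 3, 0 => 1 | 3, 1 => - C | 3, 2 => 1
  | _, _ => 0
  end.

Definition Om c : 'M[Fld]_4 := \matrix_(i, j) (omega c i j)%:~R.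
Definition Oi c : 'M[Fld]_4 := \matrix_(i, j) Iv (c%:R) i j.
Definition Pf (c : nat) : Fld := 2 + c%:R - c%:R ^+ 2.

Lemma Om_Oi c : Om c *m Oi c = (Pf c)%:M.
Proof.
apply/matrixP => i j; rewrite !mxE.
under eq_bigr do rewrite !mxE.
rewrite !big_ord_recl big_ord0 /bump /=.
case: i j => [[|[|[|[|i]]]] Hi] [[|[|[|[|j]]]] Hj] //=;
  rewrite /omega /omega_up /Pf /= ?intrB;
  rewrite -?[(Posz c)%:~R]/(c%:R : Fld) -?[(Posz 1)%:~R]/(1 : Fld) -?[(Posz 0)%:~R]/(0 : Fld)
     -?[(Posz (c + 1))%:~R]/((c + 1)%:R : Fld) ?natrD;
  move: (c%:R : Fld) => C; ring.
Qed.

Lemma natF_inj m n : (m%:R : Fld) = n%:R -> m = n.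
Proof.
rewrite -!toF_nat => /toF_inj; rewrite -!mpolyC_nat => /eqP.
by rewrite mpolyC_eq eqr_nat => /eqP.
Qed.

Lemma Pf_neq0 c : c <> 2%N -> Pf c != 0.
Proof.
move=> Hc; have -> : Pf c = (1 + c)%:R * (2 - c%:R) by rewrite /Pf natrD; ring.
rewrite mulf_neq0 //.
  by apply/negP => /eqP; rewrite -[0]/(0%:R) => /natF_inj.
rewrite subr_eq0; apply/negP => /eqP /natF_inj H.
by apply: Hc; rewrite -H.
Qed.

Lemma detOm_neq0 c : c <> 2%N -> \det (Om c) != 0.
Proof.
move=> Hc; apply/negP => /eqP H0.
have := det_mulmx (Om c) (Oi c); rewrite Om_Oi det_scalar H0 mul0r => /eqP.
by rewrite expf_eq0 /= (negbTE (Pf_neq0 Hc)).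
Qed.

Lemma nondeg c : c <> 2%N -> nondegenerate_bracket c.
Proof.
move=> Hc; rewrite /nondegenerate_bracket.
pose d : 'rV[Fld]_4 := \row_i var i.
have -> : \matrix_(i < 4, j < 4) bracket c (var i) (var j) = diag_mx d *m Om c *m diag_mx d.
  apply/matrixP => i j; rewrite mul_mx_diag mul_diag_mx !mxE bracket_var.
  move: (var i) (var j) ((omega c i j)%:~R : Fld) => a b w; ring.
rewrite !det_mulmx det_diag !mulf_neq0 ?detOm_neq0 //;
  rewrite !big_ord_recl big_ord0 /bump /= !mxE /= mulr1 !mulf_neq0 //; exact: var_neq0.
Qed.

Lemma horner_bound (K : numFieldType) (p : {poly K}) :
  exists M, forall x, `|x| <= 1 -> `|p.[x]| <= M.
Proof.
exists (\sum_(i < size p) `|p`_i|) => x Hx.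
rewrite horner_coef; apply: le_trans (ler_norm_sum _ _ _) _.
apply: ler_sum => i _; rewrite normrM normrX.
by apply: ler_piMr => //; apply: exprn_ile1.
Qed.

Lemma m2_prop (K : numFieldType) (p q : K) : 0 < p -> 0 < q ->
  [/\ 0 < p * q / (p + q), p * q / (p + q) <= p & p * q / (p + q) <= q].
Proof.
move=> Hp Hq; have Hpq : 0 < p + q by apply: addr_gt0.
split.
- by apply: divr_gt0 => //; apply: mulr_gt0.
- rewrite ler_pdivrMr // mulrDr lerDr; exact: ltW (mulr_gt0 Hp Hp).
- rewrite ler_pdivrMr // mulrDr [p * q]mulrC lerDl; exact: ltW (mulr_gt0 Hq Hq).
Qed.

Lemma P0_zero (K : fieldType) (c : nat) (a b d bet : K) : b != 0 -> d != 0 ->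
  let D := bet * d ^+ c in
  let f0 := b^-1 * (a * 0 - D) in
  let g0 := b^-1 * (d * 0 + bet * f0 ^+ c) in
  let h0 := d^-1 * (g0 * f0 + bet * 0 ^+ c) in
  (h0 * 0 + bet * g0 ^+ c) * g0 + bet * (h0 ^+ c * f0) = 0.
Proof.
move=> Hb Hd D f0 g0 h0.
have Hdc : d ^+ c != 0 by apply: expf_neq0.
case: c => [|c] in D f0 g0 h0 Hdc *.
  by rewrite /h0 /g0 /f0 /D !expr0; field; rewrite ?Hb ?Hd.
have -> : h0 = d^-1 * g0 * f0 by rewrite /h0 expr0n /=; ring.
have Eh : (d^-1 * g0 * f0) ^+ c.+1 = (d ^+ c.+1)^-1 * g0 ^+ c.+1 * f0 ^+ c.+1.
  by rewrite !exprMn exprVn.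
rewrite Eh; move: (g0 ^+ c.+1) => GC.
rewrite /g0; move: (f0 ^+ c.+1) => FC.
rewrite /f0 /D; move: (d ^+ c.+1) Hdc => dc Hdc.
field; rewrite ?Hb ?Hdc //.
Qed.

Lemma lc1 (R : comRingType) (x y l1 r1 k1 : R) :
  l1 = r1 -> x - y = k1 * (l1 - r1) -> x = y.
Proof. by move=> E H; apply/eqP; rewrite -subr_eq0 H E subrr mulr0. Qed.

Lemma lc2 (R : comRingType) (x y l1 r1 k1 l2 r2 k2 : R) :
  l1 = r1 -> l2 = r2 -> x - y = k1 * (l1 - r1) + k2 * (l2 - r2) -> x = y.
Proof. by move=> E1 E2 H; apply/eqP; rewrite -subr_eq0 H E1 E2 !subrr !mulr0 addr0. Qed.

Theorem part2 (c : nat) :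
  (forall (K : numFieldType) (bet : K) (n : int) (a b d : K) (delta0 : K)
          (x : K -> int -> K),
      bet != 0 -> b != 0 -> d != 0 -> 0 < delta0 ->
      (forall eps : K, 0 < `|eps| < delta0 ->
         [/\ x eps n = a, x eps (n + 1) = b, x eps (n + 2) = d,
             x eps (n + 4) = eps &
             forall k : nat, (k <= 4)%N ->
               x eps (n + k%:Z + 4) * x eps (n + k%:Z)
               = x eps (n + k%:Z + 3) * x eps (n + k%:Z + 1)
                 + bet * x eps (n + k%:Z + 2) ^+ c]) ->
      exists (M delta : K), 0 < delta /\
        forall eps : K, 0 < `|eps| < delta -> `|x eps (n + 8)| <= M).
Proof.
move=> K bet n a b d delta0 x Hbet Hb Hd Hd0 H.
pose D := bet * d ^+ c.
have HD : D != 0 by rewrite mulf_neq0 // expf_neq0.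
pose p3 : {poly K} := b^-1 *: (a *: 'X - D%:P).
pose p5 : {poly K} := b^-1 *: (d *: 'X + bet *: p3 ^+ c).
pose p6 : {poly K} := d^-1 *: (p5 * p3 + bet *: 'X ^+ c).
pose P : {poly K} := (p6 * 'X + bet *: p5 ^+ c) * p5 + bet *: (p6 ^+ c * p3).
have P0 : root P 0.
  rewrite /root /P /p6 /p5 /p3 !(hornerD, hornerN, hornerX, hornerC, horner_exp, hornerZ, hornerM).
  by rewrite (@P0_zero K c a b d bet Hb Hd).
have [Q EQ] := factor_theorem P 0 P0.
have [MQ HMQ] := horner_bound Q.
pose L := `|D| / (2 * `|b|).
have HL : 0 < L by rewrite divr_gt0 ?normr_gt0 // mulr_gt0 ?normr_gt0.
pose e := `|D| / (2 * (`|a| + 1)).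
have He : 0 < e by rewrite divr_gt0 ?normr_gt0 // mulr_gt0 // ltr_wpDl.
have [H1 H1a H1b] := m2_prop (@ltr01 K) Hd0.
set d1 := 1 * delta0 / (1 + delta0) in H1 H1a H1b.
have [H2 H2a H2b] := m2_prop H1 He.
set delta := d1 * e / (d1 + e) in H2 H2a H2b.
exists (MQ / L), delta; split => // eps /andP [Heps0 Heps].
have Hd0e : `|eps| < delta0.
  by apply: (lt_le_trans Heps); apply: (le_trans H2a).
have Heps1 : `|eps| <= 1.
  by apply: ltW; apply: (lt_le_trans Heps); apply: (le_trans H2a).
have Hepse : `|eps| < e by apply: (lt_le_trans Heps).
have Heps0' : eps != 0 by rewrite -normr_gt0.
have [Y0 Y1 Y2 Y4 Hrec] := H eps (introT andP (conj Heps0 Hd0e)).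
pose y (j : nat) := x eps (n + j%:Z).
have Hr : forall k, (k <= 4)%N -> y k.+4 * y k = y k.+3 * y k.+1 + bet * y k.+2 ^+ c.
  move=> k Hk; rewrite /y -[k.+4]addn4 -[k.+3]addn3 -[k.+2]addn2 -[k.+1]addn1 !PoszD !addrA.
  exact: Hrec k Hk.
have y0 : y 0 = a by rewrite /y addr0.
have y1 : y 1 = b by exact: Y1.
have y2 : y 2 = d by exact: Y2.
have y4 : y 4 = eps by exact: Y4.
have R0 := Hr 0%N isT; have R1 := Hr 1%N isT; have R2 := Hr 2%N isT.
have R3 := Hr 3%N isT; have R4 := Hr 4%N isT.
rewrite y0 y1 y2 y4 in R0; rewrite y1 y2 y4 in R1; rewrite y2 y4 in R2; rewrite y4 in R3 R4.
have Y3' : y 3 = b^-1 * (a * eps - D).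
  apply: (mulIf Hb); rewrite [RHS]mulrC mulVKf //.
  by apply: (lc1 (k1 := -1) R0); rewrite /D; ring.
have Y3 : y 3 = p3.[eps].
  by rewrite Y3' /p3 !(hornerD, hornerN, hornerX, hornerC, horner_exp, hornerZ, hornerM).
clearbody p3.
have Y5 : y 5 = p5.[eps].
  rewrite /p5 !(hornerD, hornerN, hornerX, hornerC, horner_exp, hornerZ, hornerM) -Y3.
  apply: (mulIf Hb); rewrite [RHS]mulrC mulVKf //.
  by apply: (lc1 (k1 := 1) R1); ring.
clearbody p5.
have Y6 : y 6 = p6.[eps].
  rewrite /p6 !(hornerD, hornerN, hornerX, hornerC, horner_exp, hornerZ, hornerM) -Y3 -Y5.
  apply: (mulIf Hd); rewrite [RHS]mulrC mulVKf //; by apply: (lc1 (k1 := 1) R2); ring.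
clearbody p6.
have YP : y 8 * eps * y 3 = P.[eps].
  rewrite /P !(hornerD, hornerN, hornerX, hornerC, horner_exp, hornerZ, hornerM) -Y3 -Y5 -Y6.
  apply: (lc2 R3 R4 (k1 := y 5) (k2 := y 3)); ring.
have YQ : y 8 * y 3 = Q.[eps].
  apply: (mulIf Heps0'); rewrite mulrAC YP EQ hornerM hornerD hornerN hornerX hornerC.
  by rewrite subr0.
have Hy3 : L <= `|y 3|.
  rewrite Y3' normrM normfV /L.
  have Hae : `|a * eps| <= `|D| / 2.
    rewrite normrM; apply: (le_trans (y := (`|a| + 1) * `|eps|)).
      by apply: ler_wpM2r => //; rewrite lerDl.
    apply: ltW; apply: (lt_le_trans (y := (`|a| + 1) * e)).
      by rewrite ltr_pM2l // ltr_wpDl.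
    rewrite /e le_eqVlt; apply/orP; left; apply/eqP.
    have Ha1 : `|a| + 1 != 0 by rewrite gt_eqF // ltr_wpDl.
    by field; rewrite ?Ha1.
  have HaD : `|D| / 2 <= `|a * eps - D|.
    rewrite distrC; apply: le_trans (lerB_dist _ _).
    rewrite lerBrDr; apply: (le_trans (y := `|D| / 2 + `|D| / 2)).
      by rewrite lerD2l.
    by rewrite -splitr.
  have -> : `|D| / (2 * `|b|) = `|b|^-1 * (`|D| / 2) by rewrite invfM; ring.
  by apply: ler_wpM2l => //; rewrite invr_ge0.
have Hy3n : y 3 != 0.
  by rewrite -normr_gt0; apply: lt_le_trans Hy3.
have Y8 : x eps (n + 8) = Q.[eps] / y 3.
  by rewrite -YQ mulfK.
rewrite Y8 normrM normfV ler_pdivrMr ?normr_gt0 //.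
have HMQ0 : 0 <= MQ by apply: le_trans (HMQ eps Heps1).
apply: (le_trans (HMQ eps Heps1)).
apply: (le_trans (y := MQ / L * L)); first by rewrite divfK // gt_eqF.
by apply: ler_wpM2l => //; rewrite divr_ge0 // ltW.
Qed.


Theorem proposition3p1 (c : nat) :
  (* (i) Laurent property: x_n in Z[x0^{+-1},...,x3^{+-1}, beta] for all n in Z *)
  (forall n : int, exists (p : Pol) (a0 a1 a2 a3 : nat),
      xs c n * (var 0 ^+ a0 * var 1 ^+ a1 * var 2 ^+ a2 * var 3 ^+ a3)
      = toF p)
  /\
  (* (ii) singularity confinement: along any family of orbits (parametrised by eps)
     with x_n, x_{n+1}, x_{n+2} generic and fixed and x_{n+4} = eps,
     x_{n+8} stays bounded as eps -> 0 *)
  (forall (K : numFieldType) (bet : K) (n : int) (a b d : K) (delta0 : K)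
          (x : K -> int -> K),
      bet != 0 -> b != 0 -> d != 0 -> 0 < delta0 ->
      (forall eps : K, 0 < `|eps| < delta0 ->
         [/\ x eps n = a, x eps (n + 1) = b, x eps (n + 2) = d,
             x eps (n + 4) = eps &
             forall k : nat, (k <= 4)%N ->
               x eps (n + k%:Z + 4) * x eps (n + k%:Z)
               = x eps (n + k%:Z + 3) * x eps (n + k%:Z + 1)
                 + bet * x eps (n + k%:Z + 2) ^+ c]) ->
      exists (M delta : K), 0 < delta /\
        forall eps : K, 0 < `|eps| < delta -> `|x eps (n + 8)| <= M)
  /\
  (* (iii) phi is Poisson for the log-canonical bracket {.,.}_c ... *)
  (forall i j : 'I_4,
      bracket c (var i) (var j) = (omega c i j)%:~R * var i * var j)
  /\ poisson_map c
  (* ... which is nondegenerate for c <> 2 *)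
  /\ (c <> 2%N -> nondegenerate_bracket c).
Proof.
split; first exact: part1 c.
split; first exact: part2 c.
split; first exact: bracket_var c.
split; first exact: poisson c.
exact: nondeg c.
Qed.
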